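(* Let $H=([n],E)$ be a hypergraph, let $S\subseteq E$, and let $b$ be the number of connected components of the hypergraph $([n],S)$ (isolated vertices counting as components). Then $\bigcap_{F\in S}P_F$ is isomorphic to $C^b$, and for all $0\le i\le b$, \[f_i\Big(\bigcap_{F\in S}P_F\Big)=\sum_{j=0}^i(-1)^j\binom{i}{j}(i-j+2)^b.\]
   Context: A hypergraph $H=([n],E)$ has vertex set $[n]$ and edge set $E$, a collection of nonempty subsets of $[n]$ (no edges of size 1, no edge properly contained in another). For $d\ge1$, $C^d$ denotes the triangulation of $[0,1]^d$ by the braid arrangement; identifying cube vertices with subsets of $[d]$, its faces are the chains $A_1\subsetneq\cdots\subsetneq A_l$ of subsets of $[d]$. For $F\subseteq[n]$, $P_F$ is the subcomplex of $C^n$ of faces contained in $\{x\in[0,1]^n: x_v=x_w\ \forall v,w\in F\}$, i.e., chains of subsets each of which contains $F$ or is disjoint from $F$. $f_i$ denotes the number of $i$-dimensional faces. *)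

(* Defs.v *)
From HB Require Import structures.
From mathcomp Require Import all_boot all_order all_algebra.
Set Implicit Arguments. Unset Strict Implicit. Unset Printing Implicit Defensive.

(* A (finite abstract) simplicial complex on vertex type T is given by its set of
   faces; each face is a finite nonempty set of vertices. *)

Definition vertices (T : finType) (K : {set {set T}}) : {set T} := cover K.

Definition sc_isomorphic (T1 T2 : finType) (K1 : {set {set T1}}) (K2 : {set {set T2}}) :
  Prop :=
  exists f : T1 -> T2,
    [/\ {in vertices K1 &, injective f},
        f @: vertices K1 = vertices K2 &
        forall s : {set T1}, s \subset vertices K1 -> (s \in K1) = (f @: s \in K2)].

(* number of i-dimensional faces (faces with i+1 vertices) *)
Definition fvec (T : finType) (K : {set {set T}}) (i : nat) : nat :=
  #|[set s in K | #|s| == i.+1]|.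

Definition is_chain (d : nat) (c : {set {set 'I_d}}) : bool :=
  [forall A in c, forall B in c, (A \subset B) || (B \subset A)].

(* C^d: the braid triangulation of [0,1]^d; vertices = subsets of [d],
   faces = nonempty chains A_1 < ... < A_l. *)
Definition cube (d : nat) : {set {set {set 'I_d}}} :=
  [set c | (c != set0) && is_chain c].

Definition PF (n : nat) (F : {set 'I_n}) : {set {set {set 'I_n}}} :=
  [set c in cube n | [forall A in c, (F \subset A) || [disjoint F & A]]].

(* Intersection of the subcomplexes P_F (F in S) of C^n; for S empty it is C^n. *)
Definition PS (n : nat) (S : {set {set 'I_n}}) : {set {set {set 'I_n}}} :=
  cube n :&: \bigcap_(F in S) PF F.

Definition is_hypergraph (n : nat) (E : {set {set 'I_n}}) : Prop :=
  [/\ forall F, F \in E -> F != set0,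
      forall F, F \in E -> #|F| != 1%N &
      forall F G, F \in E -> G \in E -> ~~ (F \proper G)].

Definition hadj (n : nat) (S : {set {set 'I_n}}) : rel 'I_n :=
  fun v w => [exists F in S, (v \in F) && (w \in F)].

Definition ncomp (n : nat) (S : {set {set 'I_n}}) : nat :=
  n_comp (hadj S) [set: 'I_n].

(* Main.v *)
Require Import Defs.
From HB Require Import structures.
From mathcomp Require Import all_boot all_order all_algebra.
From mathcomp Require Import zify.
Import GRing.Theory.
Import GRing.Theory.
Open Scope ring_scope.
Set Implicit Arguments. Unset Strict Implicit.

Lemma ie_alg (s d b : nat) :
 \sum_(j < s.+2) (-1)^+j * ('C(s.+1,j))%:Z * (((d-j)^b)%N)%:Z =
 \sum_(j < s.+1) (-1)^+j * ('C(s,j))%:Z * (((d-j)^b)%N)%:Z -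
 \sum_(j < s.+1) (-1)^+j * ('C(s,j))%:Z * (((d.-1-j)^b)%N)%:Z.
Proof.
rewrite big_ord_recl /=.
under eq_bigr => j _ do rewrite /bump /= add1n binS PoszD mulrDr mulrDl.
rewrite big_split /= addrA.
congr (_ + _).
  rewrite [in RHS]big_ord_recl /= !bin0 !subn0; congr (_ + _).
  rewrite big_ord_recr /= bin_small // mulr0 mul0r addr0.
  by apply: eq_bigr => j _; rewrite /bump /= add1n.
rewrite -sumrN; apply: eq_bigr => j _.
by rewrite exprS !mulN1r !mulNr subnS -subn1 subnAC subn1.
Qed.

Definition covset (aT T : finType) (D R : {set T}) :=
  [set h : {ffun aT -> T} | (h \in ffun_on D) && (R \subset codom h)].

Lemma covset_split (aT T : finType) (D R : {set T}) r : r \notin R ->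
  #|covset aT D R| = (#|covset aT D (r |: R)| + #|covset aT (D :\ r) R|)%N.
Proof.
move=> rR.
rewrite -(cardID [set h : {ffun aT -> T} | r \in codom h] (covset aT D R)).
congr (_ + _)%N; apply: eq_card => h; rewrite !inE.
  rewrite -andbA; congr (_ && _); apply/andP/subsetP => [[/subsetP HR Hr] y|H].
    by rewrite !inE => /orP[/eqP->|/HR].
  split; last by apply: H; rewrite !inE eqxx.
  by apply/subsetP => y yR; apply: H; rewrite !inE yR orbT.
case rc: (r \in codom h) => /=; rewrite ?andbF.
  apply/esym/negbTE; apply/negP => /andP [/forallP Hh _].
  by case/codomP: rc => x Ex; move: (Hh x); rewrite !inE -Ex eqxx.
congr (_ && _); apply/forallP/forallP => Hh x.
  rewrite !inE Hh andbT; apply/eqP => Ex; move/negP: rc; apply; rewrite -Ex; exact: codom_f.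
by move: (Hh x); rewrite !inE => /andP [].
Qed.

Lemma ie_count (aT T : finType) (s : nat) : forall (D R : {set T}),
  #|R| = s -> R \subset D ->
  (#|covset aT D R|)%:Z =
  \sum_(j < s.+1) (-1)^+j * ('C(s,j))%:Z * (((#|D| - j)^ #|aT|)%N)%:Z.
Proof.
elim: s => [|s IH] D R cR RD.
  rewrite big_ord_recl big_ord0 /= addr0 expr0 bin0 subn0 !mul1r.
  move/eqP: cR; rewrite cards_eq0 => /eqP ->.
  rewrite -card_ffun_on; congr (Posz _); apply: eq_card => h.
  rewrite !inE; apply/andP/idP => [[]|] // H; split => //; apply/subsetP => y; by rewrite inE.
have : (0 < #|R|)%N by rewrite cR.
case/card_gt0P => r rR.
have rR' : r \notin R :\ r by rewrite !inE eqxx.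
have cR' : #|R :\ r| = s by move: cR; rewrite (cardsD1 r R) rR add1n => -[].
have RD' : R :\ r \subset D :\ r by apply: setSD.
have := covset_split aT D rR'; rewrite setD1K // => E.
have -> : (#|covset aT D R|)%:Z = (#|covset aT D (R :\ r)|)%:Z - (#|covset aT (D :\ r) (R :\ r)|)%:Z.
  by rewrite E PoszD addrK.
rewrite (IH _ _ cR' (subset_trans (subD1set _ _) RD)) (IH _ _ cR' RD').
have -> : #|D :\ r| = (#|D|).-1 by rewrite (cardsD1 r D) (subsetP RD _ rR).
by rewrite ie_alg.
Qed.

Close Scope ring_scope.
Set Implicit Arguments. Unset Strict Implicit.

Lemma cardT_ord (v : nat) : #|[set: 'I_v]| = v.
Proof. rewrite cardsT. exact: (card_ord v). Qed.
Lemma card_lt (k v : nat) : (v <= k)%N -> #|[set t : 'I_k | (t < v)%N]| = v.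
Proof.
move=> vk.
have -> : [set t : 'I_k | (t < v)%N] = widen_ord vk @: [set: 'I_v].
  apply/setP => t; rewrite inE; apply/idP/imsetP => [tv|[u _ ->]] /=.
    by exists (Ordinal tv); [rewrite inE | apply: val_inj].
  by case: u.
rewrite card_imset; last by move=> u w /(congr1 val) /= /val_inj.
exact: cardT_ord.
Qed.

Section Chains.
Variables (b k : nat).
Implicit Types h : {ffun 'I_b -> 'I_k.+1}.

Definition Aset h (t : 'I_k) : {set 'I_b} := [set x | (h x <= t)%N].
Definition Phi h : {set {set 'I_b}} := (Aset h) @: [set: 'I_k].
Definition Rk : {set 'I_k.+1} := ~: [set ord0; ord_max].

Lemma inRk (y : 'I_k.+1) : (y \in Rk) = (0 < y < k)%N.
Proof.
rewrite !inE negb_or -!val_eqE /= -lt0n.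
by congr (_ && _); rewrite ltn_neqAle -ltnS ltn_ord andbT.
Qed.

Lemma L1 h : Rk \subset codom h -> injective (Aset h).
Proof.
move=> /subsetP cov.
suff H : forall t1 t2 : 'I_k, (t1 < t2)%N -> Aset h t1 != Aset h t2.
  move=> t1 t2 E; case: (ltngtP t1 t2) => [lt|lt|/val_inj //].
    by move: (H _ _ lt); rewrite E eqxx.
  by move: (H _ _ lt); rewrite E eqxx.
move=> t1 t2 lt.
have y2 : (t2 < k.+1)%N by apply: ltnW; rewrite ltnS.
have : Ordinal y2 \in Rk by rewrite inRk /= ltn_ord andbT (leq_ltn_trans _ lt).
move/cov/codomP => [x Ex].
apply/negP => /eqP /setP /(_ x); rewrite !inE -Ex /= leqnn.
by rewrite leqNgt lt.
Qed.

Lemma L2 h : injective (Aset h) -> Rk \subset codom h.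
Proof.
move=> inj; apply/subsetP => y; rewrite inRk => /andP [y0 yk].
apply/negPn/negP => ny.
have h1 : (y.-1 < k)%N by rewrite (leq_ltn_trans _ yk) // leq_pred.
have E : Aset h (Ordinal h1) = Aset h (Ordinal yk).
  apply/setP => x; rewrite !inE /=.
  have : h x != y by apply: contra ny => /eqP <-; exact: codom_f.
  rewrite -val_eqE /= => hy.
  apply/idP/idP => H.
    by rewrite (leq_trans H) // leq_pred.
  by rewrite -ltnS prednK // ltn_neqAle hy H.
have := inj _ _ E; move/(congr1 val) => /= /eqP.
move/eqP; lia.
Qed.

Lemma L3 h : Rk \subset codom h -> forall x, nat_of_ord (h x) = #|[set A in Phi h | x \notin A]|.
Proof.
move=> cov x.
have inj := L1 cov.
have -> : [set A in Phi h | x \notin A] = Aset h @: [set t | x \notin Aset h t].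
  apply/setP => A; rewrite inE; apply/andP/imsetP => [[/imsetP [t _ ->] xA]|[t]].
    by exists t => //; rewrite inE.
  rewrite inE => xt ->; split => //; exact: imset_f.
rewrite card_imset; last exact: inj.
have hk : (h x <= k)%N by rewrite -ltnS ltn_ord.
rewrite -{1}(card_lt hk); apply: eq_card => t.
by rewrite !inE -ltnNge.
Qed.

Lemma chainP (d : nat) (c : {set {set 'I_d}}) :
  reflect (forall A B, A \in c -> B \in c -> (A \subset B) || (B \subset A)) (is_chain c).
Proof.
apply: (iffP forallP) => [H A B Ac Bc | H A].
  by move/(_ A): H => /implyP/(_ Ac)/forallP/(_ B)/implyP/(_ Bc).
by apply/implyP => Ac; apply/forallP => B; apply/implyP => Bc; exact: H.
Qed.

Lemma L0 h : is_chain (Phi h).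
Proof.
apply/chainP => A B /imsetP [t1 _ ->] /imsetP [t2 _ ->].
case: (leqP t1 t2) => [le|/ltnW le].
  by apply/orP; left; apply/subsetP => x; rewrite !inE => /leq_trans; apply.
by apply/orP; right; apply/subsetP => x; rewrite !inE => /leq_trans; apply.
Qed.

Lemma L4 (c : {set {set 'I_b}}) : is_chain c -> #|c| = k ->
  exists2 h : {ffun 'I_b -> 'I_k.+1}, Rk \subset codom h & c = Phi h.
Proof.
move=> /chainP ch ck.
have gk x : (#|[set B in c | x \notin B]| < k.+1)%N.
  by rewrite ltnS -ck; apply: subset_leq_card; apply/subsetP => B; rewrite inE => /andP[].
pose h := [ffun x => (inord #|[set B in c | x \notin B]| : 'I_k.+1)].
have hE x : nat_of_ord (h x) = #|[set B in c | x \notin B]| by rewrite ffunE inordK.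
have sub : c \subset Phi h.
  apply/subsetP => A Ac.
  have r0 : (0 < #|[set B in c | B \subset A]|)%N.
    by apply/card_gt0P; exists A; rewrite inE Ac subxx.
  have rc : (#|[set B in c | B \subset A]| <= #|c|)%N.
    by apply: subset_leq_card; apply/subsetP => B; rewrite inE => /andP[].
  have rk : ((#|[set B in c | B \subset A]|).-1 < k)%N by rewrite -ck; lia.
  apply/imsetP; exists (Ordinal rk) => //; apply/setP => x; rewrite inE /= hE.
  case xA: (x \in A).
    have : [set B in c | x \notin B] \proper [set B in c | B \subset A].
      rewrite properE; apply/andP; split.
        apply/subsetP => B; rewrite !inE => /andP[Bc xB]; rewrite Bc /=.
        case/orP: (ch _ _ Ac Bc) => [/subsetP/(_ x xA) xB'| //].
        by rewrite xB' in xB.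
      by apply/subsetPn; exists A; rewrite !inE ?Ac ?subxx ?xA.
    by move/proper_card => lt; apply/esym; rewrite -ltnS prednK.
  have : [set B in c | B \subset A] \subset [set B in c | x \notin B].
    apply/subsetP => B; rewrite !inE => /andP[Bc /subsetP BA]; rewrite Bc /=.
    by apply/negP => /BA; rewrite xA.
  by move/subset_leq_card => le; apply/esym/negbTE; rewrite -ltnNge -ltnS prednK.
have eqc : c = Phi h.
  apply/eqP; rewrite eqEcard sub /= ck.
  by rewrite -[X in (_ <= X)%N](cardT_ord k); apply: leq_imset_card.
exists h => //; apply: L2.
have /imset_injP inj : #|Aset h @: [set: 'I_k]| == #|[set: 'I_k]|.
  by rewrite -/(Phi h) -eqc ck cardT_ord.
by move=> t1 t2; apply: inj; rewrite inE.
Qed.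

End Chains.

Lemma chain_count b k : (0 < k)%N ->
  #|[set c in cube b | #|c| == k]| = #|covset 'I_b [set: 'I_k.+1] (Rk k)|.
Proof.
move=> k0.
have inj : {in covset 'I_b [set: 'I_k.+1] (Rk k) &, injective (@Phi b k)}.
  move=> h1 h2; rewrite !inE => /andP[_ c1] /andP[_ c2] E.
  by apply/ffunP => x; apply/val_inj; change (nat_of_ord (h1 x) = nat_of_ord (h2 x)); rewrite (L3 c1) (L3 c2) E.
rewrite -(card_in_imset inj); apply: eq_card => c.
rewrite inE; apply/andP/imsetP => [[cc /eqP ck]|[h hc ->]].
  move: cc; rewrite inE => /andP[_ ch].
  have [h hc ->] := L4 ch ck.
  exists h => //; rewrite inE hc andbT; apply/ffun_onP => x; exact: in_setT.
move: hc; rewrite inE => /andP[_ hc].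
split.
  rewrite inE L0 andbT; apply/set0Pn; exists (Aset h (Ordinal k0)); exact: imset_f.
rewrite /Phi card_imset; last exact: L1.
by rewrite cardT_ord.
Qed.


Lemma fvec_iso (T1 T2 : finType) (K1 : {set {set T1}}) (K2 : {set {set T2}}) :
  sc_isomorphic K1 K2 -> forall i, fvec K1 i = fvec K2 i.
Proof.
case=> f [inj imV faces] i.
have subV (T : finType) (K : {set {set T}}) s : s \in K -> s \subset vertices K.
  by move=> sK; rewrite /vertices /cover; exact: (@bigcup_sup _ _ s (mem K) id).
have injs (s : {set T1}) : s \subset vertices K1 -> {in s &, injective f}.
  by move=> /subsetP sV x y xs ys; apply: inj; apply: sV.
have injS : {in [set s in K1 | #|s| == i.+1] &, injective (fun s : {set T1} => f @: s)}.
  suff H : forall s1 s2, s1 \in K1 -> s2 \in K1 -> f @: s1 = f @: s2 -> s1 \subset s2.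
    move=> s1 s2; rewrite !inE => /andP[s1K _] /andP[s2K _] E.
    by apply/eqP; rewrite eqEsubset !H.
  move=> s1 s2 s1K s2K E; apply/subsetP => x xs.
  have : f x \in f @: s2 by rewrite -E imset_f.
  case/imsetP => y ys fxy.
  by rewrite (inj x y (subsetP (subV _ _ _ s1K) x xs) (subsetP (subV _ _ _ s2K) y ys) fxy).
rewrite /fvec -(card_in_imset injS); apply: eq_card => t.
rewrite inE; apply/imsetP/andP => [[s]|[tK /eqP tc]]; last first.
  pose s := vertices K1 :&: f @^-1: t.
  have sV : s \subset vertices K1 by apply: subsetIl.
  have fs : f @: s = t.
    apply/setP => y; apply/imsetP/idP => [[x] |yt].
      by rewrite !inE => /andP[_ ?] ->.
    have : y \in f @: vertices K1 by rewrite imV; apply: (subsetP (subV _ _ _ tK)).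
    case/imsetP => x xV yE; exists x => //. by rewrite !inE xV -yE.
  exists s => //.
  rewrite inE (faces _ sV) fs tK /= -tc -fs card_in_imset //; exact: injs.
rewrite inE => /andP[sK /eqP sc] ->.
split; first by rewrite -faces // subV.
by rewrite card_in_imset ?sc //; apply: injs; apply: subV.
Qed.


Section Comp.
Variables (n : nat) (S : {set {set 'I_n}}).

Lemma hadj_sym : symmetric (hadj S).
Proof. by move=> v w; rewrite /hadj; apply: eq_existsb => F; rewrite [(v \in F) && _]andbC. Qed.

Let csym := sym_connect_sym hadj_sym.
Local Notation rt := (fingraph.root (hadj S)).

Definition closedS (A : {set 'I_n}) := [forall F in S, (F \subset A) || [disjoint F & A]].

Lemma closed_root A : closedS A -> forall x, (x \in A) = (rt x \in A).
Proof.
move=> /forallP cA x; apply: closed_connect; last exact: connect_root.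
move=> y z /existsP [F /and3P [FS yF zF]].
move/implyP: (cA F) => /(_ FS) /orP [/subsetP FA | dA].
  by rewrite !FA.
by rewrite (disjointFr dA yF) (disjointFr dA zF).
Qed.

Definition rv (k : 'I_(ncomp S)) : 'I_n :=
  @enum_val _ (predI (roots (hadj S)) (mem [set: 'I_n])) k.

Lemma rv_root k : rt (rv k) = rv k.
Proof. by have := enum_valP k; rewrite inE => /andP [/eqP]. Qed.

Lemma rv_inj : injective rv.
Proof. exact: enum_val_inj. Qed.

Lemma rv_surj x : exists k, rv k = rt x.
Proof.
have Ax : rt x \in predI (roots (hadj S)) (mem [set: 'I_n]).
  by rewrite !inE roots_root.
by exists (enum_rank_in Ax (rt x)); rewrite /rv enum_rankK_in.
Qed.

Definition fS (A : {set 'I_n}) : {set 'I_(ncomp S)} := [set k | rv k \in A].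
Definition gS (K : {set 'I_(ncomp S)}) : {set 'I_n} := [set x | [exists k in K, rv k == rt x]].

Lemma gf A : closedS A -> gS (fS A) = A.
Proof.
move=> cA; apply/setP => x; rewrite inE (closed_root cA).
apply/existsP/idP => [[k /andP [kA /eqP <-]]|xA].
  by rewrite inE in kA.
by have [k kE] := rv_surj x; exists k; rewrite inE kE xA eqxx.
Qed.

Lemma fg K : fS (gS K) = K.
Proof.
apply/setP => k; rewrite !inE; apply/existsP/idP => [[k' /andP [k'K /eqP E]]|kK].
  by move: E; rewrite rv_root => /rv_inj <-.
by exists k; rewrite kK rv_root eqxx.
Qed.

Lemma g_closed K : closedS (gS K).
Proof.
apply/forallP => F; apply/implyP => FS.
have same v w : v \in F -> w \in F -> rt v = rt w.
  move=> vF wF; apply/(fingraph.rootP csym); apply: connect1.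
  by apply/existsP; exists F; rewrite FS vF wF.
have gE v w : rt v = rt w -> (v \in gS K) = (w \in gS K).
  by move=> E; rewrite !inE E.
case: (boolP [exists v in F, v \in gS K]) => [/existsP [v /andP [vF vK]]|nE].
  by apply/orP; left; apply/subsetP => w wF; rewrite -(gE v w (same v w vF wF)).
apply/orP; right; rewrite -setI_eq0; apply/eqP/setP => w; rewrite !inE.
apply/negbTE/negP => /andP [wF wK]; move/negP: nE; apply.
by apply/existsP; exists w; rewrite wF inE.
Qed.

Lemma f_mono A B : closedS A -> closedS B -> (A \subset B) = (fS A \subset fS B).
Proof.
move=> cA cB; apply/idP/idP => /subsetP H; apply/subsetP.
  by move=> k; rewrite !inE => /H.
move=> x; rewrite -(gf cA) -(gf cB) !inE => /existsP [k /andP [kA kE]].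
by apply/existsP; exists k; rewrite kE H.
Qed.

End Comp.

Lemma vertPS n (S : {set {set 'I_n}}) A : (A \in vertices (PS S)) = closedS S A.
Proof.
have inPS1 : [set A] \in cube n.
  rewrite inE; apply/andP; split.
    by apply/set0Pn; exists A; rewrite set11.
  by apply/chainP => B C; rewrite !inE => /eqP-> /eqP->; rewrite subxx.
rewrite /vertices /cover; apply/bigcupP/idP => [[s sP As]| cA].
  apply/forallP => F; apply/implyP => FS.
  move: sP; rewrite inE => /andP [_ /bigcapP /(_ F FS)].
  by rewrite inE => /andP [_ /forallP /(_ A) /implyP /(_ As)].
exists [set A]; last by rewrite set11.
rewrite inE inPS1 /=; apply/bigcapP => F FS; rewrite inE inPS1 /=.
apply/forallP => B; apply/implyP; rewrite inE => /eqP ->.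
by move/forallP: cA => /(_ F) /implyP /(_ FS).
Qed.

Lemma vertCube d (A : {set 'I_d}) : A \in vertices (cube d).
Proof.
rewrite /vertices /cover; apply/bigcupP; exists [set A]; last by rewrite set11.
rewrite inE; apply/andP; split.
  by apply/set0Pn; exists A; rewrite set11.
by apply/chainP => B C; rewrite !inE => /eqP-> /eqP->; rewrite subxx.
Qed.

Lemma inPS n (S : {set {set 'I_n}}) (s : {set {set 'I_n}}) :
  {in s, forall A, closedS S A} -> (s \in PS S) = (s \in cube n).
Proof.
move=> cs; rewrite /PS inE; case E: (s \in cube n) => //=.
apply/bigcapP => F FS; rewrite inE E /=.
apply/forallP => A; apply/implyP => As.
by move/forallP: (cs A As) => /(_ F) /implyP /(_ FS).
Qed.

Lemma PS_iso n (S : {set {set 'I_n}}) : sc_isomorphic (PS S) (cube (ncomp S)).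
Proof.
exists (@fS n S); split.
- by move=> A B; rewrite !vertPS => cA cB E; rewrite -(gf cA) -(gf cB) E.
- apply/setP => K; rewrite vertCube; apply/imsetP; exists (gS K); last by rewrite fg.
  by rewrite vertPS; exact: g_closed.
move=> s /subsetP sV.
have cs : {in s, forall A, closedS S A} by move=> A /sV; rewrite vertPS.
rewrite inPS // !inE imset_eq0; congr (_ && _).
apply/chainP/chainP => H A B.
  case/imsetP => A' A's -> /imsetP [B' B's ->].
  by rewrite -!f_mono ?cs //; apply: H.
move=> As Bs; rewrite (f_mono (cs A As) (cs B Bs)) (f_mono (cs B Bs) (cs A As)).
by apply: H; apply: imset_f.
Qed.

Theorem mainTheorem6 (n : nat) (E S : {set {set 'I_n}}) :
  is_hypergraph E -> S \subset E ->
  sc_isomorphic (PS S) (cube (ncomp S)) /\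
  (forall i : nat, (i <= ncomp S)%N ->
     Posz (fvec (PS S) i) =
     (\sum_(j < i.+1) (-1) ^+ j * Posz 'C(i, j) * Posz ((i - j + 2) ^ ncomp S)%N)%R).
Proof.
move=> _ _; split; first exact: PS_iso.
move=> i _.
rewrite (fvec_iso (PS_iso S)) /fvec chain_count //.
have cR : #|Rk i.+1| = i.
  rewrite /Rk cardsCs setCK cards2 card_ord.
  have -> : ((ord0 : 'I_i.+2) != ord_max) by rewrite -val_eqE.
  by rewrite /= !subSS subn0.
rewrite (ie_count _ cR (subsetT _)) cardT_ord card_ord.
apply: eq_bigr => j _.
have -> : (i.+2 - j = i - j + 2)%N by have := ltn_ord j; lia.
by [].
Qed.
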